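(* Let $U$ be a $d\times d$ unitary matrix, $U_{ij}=\langle a_i|b_j\rangle$ for two orthonormal bases $\{|a_i\rangle\}$, $\{|b_j\rangle\}$ of $\mathbb{C}^d$, and let $p_i=\langle a_i|\rho|a_i\rangle$, $q_j=\langle b_j|\rho|b_j\rangle$ for a state $\rho$ on $\mathbb{C}^d$. For $k=1,\dots,d$ let $s_k=\max\{\|M\|: M \text{ a submatrix of } U \text{ with } \#\mathrm{cols}(M)+\#\mathrm{rows}(M)=k+1\}$, where $\|M\|$ is the largest singular value, and let $W=(s_1,s_2-s_1,\dots,s_d-s_{d-1})$. Then for every $\alpha\ge0$, $$T_\alpha(p)+T_\alpha(q)\ge T_\alpha(W).$$
   Context: The Tsallis (Havrda–Charvat) entropy of order $\alpha\neq1$ of a probability vector $x$ is $T_\alpha(x)=\frac{1}{1-\alpha}\left(\sum_i x_i^\alpha-1\right)$; for $\alpha=1$ it is understood as its limit, the Shannon entropy $-\sum_i x_i\ln x_i$. A submatrix is obtained by selecting a nonempty set of rows and a nonempty set of columns. *)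

(* Defs.v *)
From HB Require Import structures.
From mathcomp Require Import all_boot all_order all_algebra.
From mathcomp Require Import complex.
From mathcomp Require Import boolp classical_sets reals exp.
Set Implicit Arguments. Unset Strict Implicit. Unset Printing Implicit Defensive.
Import Order.TTheory GRing.Theory Num.Theory.
Local Open Scope ring_scope.

Definition adjmx (R : realType) m n (M : 'M[R[i]]_(m, n)) : 'M[R[i]]_(n, m) :=
  (map_mx (@conjc R) M)^T.

Definition submx_of (R : realType) d (U : 'M[R[i]]_d) (A B : {set 'I_d}) :
  'M[R[i]]_(#|A|, #|B|) :=
  \matrix_(i < #|A|, j < #|B|) U (enum_val i) (enum_val j).

Definition sing_max (R : realType) m n (M : 'M[R[i]]_(m, n)) : R :=
  Num.sqrt (sup [set lam : R | eigenvalue (adjmx M *m M) (lam%:C)%C]).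

Definition s_seq (R : realType) d (U : 'M[R[i]]_d) (k : nat) : R :=
  if k is 0 then 0 else
  sup [set x : R | exists A B : {set 'I_d},
         [/\ (0 < #|A|)%N, (0 < #|B|)%N, (#|A| + #|B| = k.+1)%N &
             x = sing_max (submx_of U A B)]].

Definition Wvec (R : realType) d (U : 'M[R[i]]_d) : 'I_d -> R :=
  fun k => s_seq U k.+1 - s_seq U k.

Definition tsallis (R : realType) (I : finType) (alpha : R) (x : I -> R) : R :=
  if alpha == 1 then - \sum_i x i * ln (x i)
  else (1 - alpha)^-1 * (\sum_(i | 0 < x i) powR (x i) alpha - 1).

Definition is_state (R : realType) d (rho : 'M[R[i]]_d) : Prop :=
  [/\ adjmx rho = rho,
      (forall v : 'cV[R[i]]_d, 0 <= (adjmx v *m rho *m v) 0 0) &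
      \tr rho = 1].

(* the columns of A form an orthonormal basis of C^d *)
Definition onb (R : realType) d (A : 'M[R[i]]_d) : Prop := adjmx A *m A = 1%:M.

(* Main.v *)
Require Import Defs.
From HB Require Import structures.
From mathcomp Require Import all_boot all_order all_algebra.
From mathcomp Require Import complex.
From mathcomp Require Import boolp classical_sets reals exp.
From mathcomp Require Import sesquilinear spectral.
From mathcomp Require Import ring lra zify.
Import Order.TTheory GRing.Theory Num.Theory.
Local Open Scope ring_scope.

Section PartA.
Variable R : realType.
Variable alpha : R.
Hypothesis a0 : 0 <= alpha.

Definition phi (x : R) : R :=
  if alpha == 1 then - (x * ln x)
  else (1 - alpha)^-1 * ((if 0 < x then powR x alpha else 0) - x).

Definition slope (x : R) : R :=
  if alpha == 1 then - ln x - 1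
  else (1 - alpha)^-1 * (alpha * powR x (alpha - 1) - 1).

Lemma phi0 : phi 0 = 0.
Proof. rewrite /phi ltxx; case: ifP => _; [by rewrite mul0r oppr0 | by rewrite subr0 mulr0]. Qed.

Lemma phi1 : phi 1 = 0.
Proof. by rewrite /phi ltr01 powR1 ln1; case: ifP => _; rewrite ?mulr0 ?oppr0 ?subrr ?mulr0. Qed.

Lemma bern_lt1 (t : R) : 0 < t -> alpha < 1 -> powR t alpha <= 1 + alpha * (t - 1).
Proof.
move=> t0 a1; have [->|ap] := eqVneq alpha 0.
  by rewrite powRr0 mul0r addr0.
have apos : 0 < alpha by rewrite lt_neqAle eq_sym ap a0.
have p0 : 0 < alpha^-1 by rewrite invr_gt0.
have q0 : 0 < (1 - alpha)^-1 by rewrite invr_gt0 subr_gt0.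
have := @conjugate_powR R (powR t alpha) 1 alpha^-1 (1 - alpha)^-1 (powR_ge0 _ _) ler01 p0 q0.
rewrite !invrK addrC subrK => /(_ erefl).
rewrite mulr1 -powRrM mulfV ?gt_eqF // powRr1 ?(ltW t0) // powR1.
move=> H; apply: (le_trans H); lra.
Qed.

Lemma bern_gt1 (t : R) : 0 < t -> 1 < alpha -> 1 + alpha * (t - 1) <= powR t alpha.
Proof.
move=> t0 a1.
have apos : 0 < alpha by lra.
have q0 : 0 < alpha / (alpha - 1) by rewrite divr_gt0 // subr_gt0.
have := @conjugate_powR R t 1 alpha (alpha / (alpha - 1)) (ltW t0) ler01 apos q0.
rewrite invf_div.
have -> : alpha^-1 + (alpha - 1) / alpha = 1.
  by field; rewrite gt_eqF.
move=> /(_ erefl); rewrite mulr1 powR1 => H.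
have : alpha * t <= powR t alpha + (alpha - 1).
  have := ler_wpM2l (ltW apos) H.
  have -> : alpha * (t `^ alpha / alpha + 1 * ((alpha - 1) / alpha)) = t `^ alpha + (alpha - 1).
    by field; rewrite gt_eqF.
  by [].
lra.
Qed.

Lemma tangent x y : 0 < x -> 0 <= y -> phi y <= phi x + slope x * (y - x).
Proof.
move=> x0 y0; rewrite /phi /slope x0.
case: ifP => [/eqP a1|/eqP a1].
  have [->|yp] := eqVneq y 0.
    rewrite mul0r oppr0. nra.
  have ypos : 0 < y by rewrite lt_neqAle eq_sym yp y0.
  have H := @le_ln1Dx R (x / y - 1).
  have Hm : -1 < x / y - 1 by have := divr_gt0 x0 ypos; lra.
  move: (H Hm); rewrite addrC subrK ln_div ?posrE // => H2.
  have H3 := ler_wpM2l (ltW ypos) H2.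
  rewrite mulrBr mulrBr mulrCA mulfV ?gt_eqF // mulr1 mulr1 in H3.
  nra.
set k := (1 - alpha)^-1.
set P := powR x (alpha - 1).
set X := powR x alpha.
have PX : P * x = X.
  rewrite /P /X -{2}(powRr1 (ltW x0)) -powRD ?subrK //.
  by apply/implyP => _; rewrite gt_eqF.
suff : k * ((if 0 < y then powR y alpha else 0) - X - alpha * P * (y - x)) <= 0.
  nra.
have Xpos : 0 < X by rewrite /X powR_gt0.
have [a1'|a1'|a1'] := ltgtP alpha 1; last by case: a1.
- have kpos : 0 < k by rewrite /k invr_gt0 subr_gt0.
  rewrite pmulr_rle0 //.
  case: ifP => yp.
    have t0 : 0 < y / x by rewrite divr_gt0.
    have B := bern_lt1 _ t0 a1'.
    have -> : y = x * (y / x) by rewrite mulrCA mulfV ?gt_eqF ?mulr1.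
    rewrite powRM ?(ltW x0) ?(ltW t0) // -/X.
    set t := y / x in B *.
    have -> : alpha * P * (x * t - x) = alpha * (P * x) * (t - 1) by ring.
    rewrite PX. nra.
  have yz : y = 0 by apply/eqP; rewrite eq_le y0 andbT leNgt yp.
  rewrite yz sub0r.
  have E : alpha * P * (0 - x) = - (alpha * (P * x)) by ring.
  rewrite E PX. nra.
- have kneg : k < 0 by rewrite /k invr_lt0 subr_lt0.
  rewrite nmulr_rle0 //.
  case: ifP => yp.
    have t0 : 0 < y / x by rewrite divr_gt0.
    have B := bern_gt1 _ t0 a1'.
    have -> : y = x * (y / x) by rewrite mulrCA mulfV ?gt_eqF ?mulr1.
    rewrite powRM ?(ltW x0) ?(ltW t0) // -/X.
    set t := y / x in B *.
    have -> : alpha * P * (x * t - x) = alpha * (P * x) * (t - 1) by ring.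
    rewrite PX. nra.
  have yz : y = 0 by apply/eqP; rewrite eq_le y0 andbT leNgt yp.
  rewrite yz sub0r.
  have E : alpha * P * (0 - x) = - (alpha * (P * x)) by ring.
  rewrite E PX. nra.
Qed.


Lemma slope_anti a b : 0 < a -> a <= b -> slope b <= slope a.
Proof.
move=> a0' ab; have b0 : 0 < b by apply: lt_le_trans ab.
have H1 := @tangent a b a0' (ltW b0); have H2 := @tangent b a b0 (ltW a0').
have [->|ne] := eqVneq a b; first by [].
have lt : a < b by rewrite lt_neqAle ne ab.
nra.
Qed.

Lemma abel (c z : nat -> R) n : (forall i, (i.+1 < n)%N -> c i <= c i.+1) ->
  (forall k, (k <= n)%N -> \sum_(i < k) z i <= 0) ->
  c n.-1 * \sum_(i < n) z i <= \sum_(i < n) c i * z i.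
Proof.
elim: n => [|n IH] hc hz; first by rewrite !big_ord0 mulr0.
have IH' := IH (fun i hi => hc i (ltn_trans hi (ltnSn _)))
                (fun k hk => hz k (leq_trans hk (leqnSn _))).
rewrite !big_ord_recr /=.
have Zn := hz n (leqnSn _).
have cn : c n.-1 <= c n.
  case: n {IH IH' Zn hz} hc => [|n] hc //=; exact: hc.
set Z := \sum_(i < n) z i in IH' Zn *.
have : (c n - c n.-1) * Z <= 0 by rewrite mulr_ge0_le0 // subr_ge0.
nra.
Qed.

Lemma karamata (x y : nat -> R) n N : (n <= N)%N ->
  (forall i, (i < n)%N -> 0 < x i) ->
  (forall i j, (i <= j)%N -> (j < n)%N -> x j <= x i) ->
  (forall i, 0 <= y i) ->
  (forall k, (k <= n)%N -> \sum_(i < k) x i <= \sum_(i < k) y i) ->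
  \sum_(i < n) x i = \sum_(i < N) y i ->
  \sum_(i < N) phi (y i) <= \sum_(i < n) phi (x i).
Proof.
move=> nN xpos xdec ypos hk htot.
have split_y (F : nat -> R) : \sum_(i < N) F i = \sum_(i < n) F i + \sum_(n <= i < N) F i.
  by rewrite -!(big_mkord xpredT) (big_cat_nat (leq0n n) nN).
have tail0 : forall i, (n <= i < N)%N -> y i = 0.
  have hn := hk n (leqnn n).
  rewrite htot (split_y y) in hn.
  have : \sum_(n <= i < N) y i <= 0 by lra.
  move=> Hle i /andP[ni iN].
  have Hge : 0 <= \sum_(n <= i < N) y i by apply: sumr_ge0 => j _; exact: ypos.
  have /eqP := le_anti (introT andP (conj Hle Hge)).
  rewrite psumr_eq0; last by move=> j _; exact: ypos.
  move=> /allP /(_ i); rewrite mem_index_iota ni iN => /(_ isT) /eqP.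
  by [].
rewrite (split_y (fun i => phi (y i))).
have -> : \sum_(n <= i < N) phi (y i) = 0.
  rewrite big_nat big1 // => i hi; by rewrite tail0 // phi0.
rewrite addr0.
have tot' : \sum_(i < n) x i = \sum_(i < n) y i.
  rewrite htot (split_y y).
  have -> : \sum_(n <= i < N) y i = 0 by rewrite big_nat big1 // => i hi; exact: tail0.
  by rewrite addr0.
have step : \sum_(i < n) phi (y i) <= \sum_(i < n) phi (x i) + \sum_(i < n) slope (x i) * (y i - x i).
  rewrite -big_split /=; apply: ler_sum => i _.
  exact: (@tangent (x i) (y i) (xpos i (ltn_ord i)) (ypos i)).
suff : \sum_(i < n) slope (x i) * (y i - x i) <= 0 by lra.
have := @abel (fun i => slope (x i)) (fun i => x i - y i) n.
have hc : forall i, (i.+1 < n)%N -> slope (x i) <= slope (x i.+1).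
  move=> i hi; apply: slope_anti; first exact: xpos.
  exact: xdec.
move=> /(_ hc).
have hz : forall k, (k <= n)%N -> \sum_(i < k) (x i - y i) <= 0.
  move=> k kn; rewrite sumrB subr_le0; exact: hk.
move=> /(_ hz).
rewrite sumrB tot' subrr mulr0 => H.
have -> : \sum_(i < n) slope (x i) * (y i - x i) = - \sum_(i < n) slope (x i) * (x i - y i).
  rewrite -sumrN; apply: eq_bigr => i _; ring.
lra.
Qed.

Lemma tsallis_phi (I : finType) (x : I -> R) : \sum_i x i = 1 ->
  tsallis alpha x = \sum_i phi (x i).
Proof.
move=> h1; rewrite /tsallis /phi; case: ifP => _.
  by rewrite -sumrN.
rewrite -mulr_sumr sumrB h1 -big_mkcond /=.
by [].
Qed.

End PartA.

Set Implicit Arguments. Unset Strict Implicit.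

Section B.
Variable R : realType.
Local Notation C := R[i].

Lemma adjmxE m n (A : 'M[C]_(m,n)) : adjmx A = (A ^t* )%sesqui.
Proof. by rewrite /adjmx map_trmx. Qed.

Lemma adjmxK m n (A : 'M[C]_(m,n)) : adjmx (adjmx A) = A.
Proof. by rewrite !adjmxE trmxCK. Qed.

Lemma adjmxM m n p (A : 'M[C]_(m,n)) (B : 'M[C]_(n,p)) :
  adjmx (A *m B) = adjmx B *m adjmx A.
Proof. by rewrite !adjmxE trmx_mul map_mxM. Qed.

Lemma adjmx_ij m n (A : 'M[C]_(m,n)) i j : adjmx A i j = (A j i)^*.
Proof. by rewrite /adjmx !mxE. Qed.

Lemma nrowE n (u : 'rV[C]_n) : (u *m adjmx u) 0 0 = \sum_k `|u 0 k| ^+ 2.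
Proof. by rewrite mxE; apply: eq_bigr => k _; rewrite adjmx_ij normCK. Qed.

Lemma ncolE n (y : 'cV[C]_n) : (adjmx y *m y) 0 0 = \sum_k `|y k 0| ^+ 2.
Proof. by rewrite mxE; apply: eq_bigr => k _; rewrite adjmx_ij normCK mulrC. Qed.

Lemma sumn2_ge0 n (F : 'I_n -> C) : 0 <= \sum_k `|F k| ^+ 2.
Proof. by apply: sumr_ge0 => k _; rewrite exprn_ge0. Qed.

Lemma nrow_gt0 n (u : 'rV[C]_n) : u != 0 -> 0 < (u *m adjmx u) 0 0.
Proof.
move=> nz; rewrite nrowE lt_def sumn2_ge0 andbT.
apply/negP => /eqP /psumr_eq0P H.
move/negP: nz; apply; apply/eqP/rowP => k; rewrite mxE.
have := H (fun i _ => exprn_ge0 _ (normr_ge0 _)) k isT.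
by move/eqP; rewrite sqrf_eq0 normr_eq0 => /eqP.
Qed.

Section Spec.
Variables (m n : nat) (M : 'M[C]_(m, n)).
Hypothesis hn : (0 < n)%N.
Let H := adjmx M *m M.

Lemma H_herm : H \is hermsymmx.
Proof.
apply/is_hermitianmxP; rewrite expr0 scale1r.
by rewrite -adjmxE /H adjmxM adjmxK.
Qed.

Lemma rayleigh : exists lam : R,
  [/\ forall l : R, eigenvalue H l%:C%C -> l <= lam,
      eigenvalue H lam%:C%C,
      forall u : 'rV_n, (u *m H *m adjmx u) 0 0 <= lam%:C%C * (u *m adjmx u) 0 0 &
      exists2 u : 'rV_n, u != 0 & (u *m H *m adjmx u) 0 0 = lam%:C%C * (u *m adjmx u) 0 0].
Proof.
pose P := spectralmx H; pose D := spectral_diag H.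
have Pu : P \is unitarymx by apply: spectral_unitarymx.
have PP : P *m adjmx P = 1%:M by rewrite adjmxE; apply/unitarymxP.
have P'P : adjmx P *m P = 1%:M by apply: mulmx1C.
have HE : H = adjmx P *m diag_mx D *m P.
  rewrite adjmxE -invmx_unitary //.
  exact/orthomx_spectralP/hermitian_normalmx/H_herm.
have Dreal : forall k, D 0 k \is Num.real.
  by move=> k; have /mxOverP := hermitian_spectral_diag_real H_herm; apply.
pose Dr k := complex.Re (D 0 k).
have DE k : D 0 k = (Dr k)%:C%C by rewrite /Dr RRe_real.
case: (@arg_maxP _ _ _ (Ordinal hn) xpredT Dr isT) => k0 _ Hk0.
exists (Dr k0).
have quad : forall u : 'rV_n, (u *m H *m adjmx u) 0 0 = 
    \sum_k (Dr k)%:C%C * `|(u *m adjmx P) 0 k| ^+ 2.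
  move=> u; rewrite HE !mulmxA.
  set w := u *m adjmx P.
  have -> : u *m adjmx P *m diag_mx D *m P *m adjmx u = w *m diag_mx D *m adjmx w.
    by rewrite /w -!mulmxA adjmxM adjmxK.
  rewrite mxE; apply: eq_bigr => k _.
  rewrite mul_mx_diag !mxE DE normCK; ring.
have nw : forall u : 'rV_n, (u *m adjmx u) 0 0 = \sum_k `|(u *m adjmx P) 0 k| ^+ 2.
  move=> u; rewrite -nrowE adjmxM adjmxK -mulmxA (mulmxA (adjmx P)) P'P mul1mx.
  by [].
have bound : forall u : 'rV_n, (u *m H *m adjmx u) 0 0 <= (Dr k0)%:C%C * (u *m adjmx u) 0 0.
  move=> u; rewrite quad nw mulr_sumr; apply: ler_sum => k _.
  by apply: ler_wpM2r; [rewrite exprn_ge0 | rewrite lecR; apply: Hk0].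
pose u0 : 'rV_n := 'e_k0 *m P.
have eigu : u0 *m H = (Dr k0)%:C%C *: u0.
  rewrite HE /u0 !mulmxA -(mulmxA _ P) PP mulmx1 -rowE row_diag_mx -DE.
  by rewrite -scalemxAl.
have u0nz : u0 != 0.
  apply/negP => /eqP h.
  have : u0 *m adjmx P = 'e_k0 by rewrite /u0 -mulmxA PP mulmx1.
  rewrite h mul0mx => /matrixP /(_ 0 k0); rewrite !mxE !eqxx /=.
  by move/eqP; rewrite eq_sym oner_eq0.
split.
- move=> l /eigenvalueP [v hv vnz].
  have := bound v; rewrite hv -scalemxAl mxE.
  rewrite (ler_pM2r (@nrow_gt0 _ _ vnz)).
  by rewrite lecR.
- by apply/eigenvalueP; exists u0.
- exact: bound.
- exists u0 => //.
  by rewrite eigu -scalemxAl mxE.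
Qed.

End Spec.

Definition lamM m n (M : 'M[C]_(m,n)) :=
  sup [set l : R | eigenvalue (adjmx M *m M) l%:C%C].
Definition ncol n (y : 'cV[C]_n) := (adjmx y *m y) 0 0.

Lemma ncol_ge0 n (y : 'cV[C]_n) : 0 <= ncol y.
Proof. by rewrite /ncol ncolE sumn2_ge0. Qed.

Lemma ncol_gt0 n (y : 'cV[C]_n) : y != 0 -> 0 < ncol y.
Proof.
move=> nz; rewrite /ncol -{2}(adjmxK y); apply: nrow_gt0.
apply: contraNneq nz => h; by rewrite -(adjmxK y) h /adjmx map_mx0 trmx0.
Qed.

Lemma lamM_spec m n (M : 'M[C]_(m,n)) : (0 < n)%N ->
  [/\ forall y, ncol (M *m y) <= (lamM M)%:C%C * ncol y,
      exists2 y, y != 0 & ncol (M *m y) = (lamM M)%:C%C * ncol y &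
      0 <= lamM M].
Proof.
move=> hn; have [lam [ub ev bnd [u unz att]]] := rayleigh M hn.
have -> : lamM M = lam.
  rewrite /lamM; apply/eqP; rewrite eq_le; apply/andP; split.
    by apply: ge_sup; [exists lam | move=> l; apply: ub].
  by apply: ub_le_sup => //; exists lam => l; apply: ub.
have colq : forall y : 'cV_n, ncol (M *m y) = ((adjmx y) *m (adjmx M *m M) *m adjmx (adjmx y)) 0 0.
  by move=> y; rewrite /ncol adjmxK adjmxM !mulmxA.
have att' : ncol (M *m adjmx u) = lam%:C%C * ncol (adjmx u).
  by rewrite colq adjmxK att /ncol adjmxK.
have unz' : adjmx u != 0.
  apply: contraNneq unz => h; by rewrite -(adjmxK u) h /adjmx map_mx0 trmx0.
split.
- by move=> y; rewrite colq /ncol; have := bnd (adjmx y); rewrite !adjmxK.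
- by exists (adjmx u).
- have := ncol_ge0 (M *m adjmx u); rewrite att'.
  by rewrite (pmulr_lge0 _ (ncol_gt0 unz')) lecR.
Qed.

Section Sub.
Variables (d : nat) (U : 'M[C]_d).
Hypothesis hU : adjmx U *m U = 1%:M.

Definition extv (T : {set 'I_d}) (y : 'cV[C]_#|T|) : 'cV[C]_d :=
  \col_j \sum_l (enum_val l == j)%:R * y l 0.

Lemma ncolU (z : 'cV[C]_d) : ncol (U *m z) = ncol z.
Proof. by rewrite /ncol adjmxM -mulmxA (mulmxA (adjmx U)) hU mul1mx. Qed.

Lemma sub_mul (S T : {set 'I_d}) (y : 'cV[C]_#|T|) k :
  (submx_of U S T *m y) k 0 = (U *m extv y) (enum_val k) 0.
Proof.
rewrite !mxE; under [RHS]eq_bigr do rewrite mxE mulr_sumr.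
rewrite exchange_big /=; apply: eq_bigr => l _.
rewrite mxE (bigD1 (enum_val l)) //= big1 ?addr0 ?eqxx ?mul1r //.
by move=> j /negbTE nj; rewrite eq_sym nj mul0r mulr0.
Qed.

Lemma ncol_sub (S T : {set 'I_d}) (y : 'cV[C]_#|T|) :
  ncol (submx_of U S T *m y) = \sum_(i in S) `|(U *m extv y) i 0| ^+ 2.
Proof.
rewrite /ncol ncolE (big_enum_val (fun i => `|(U *m extv y) i 0| ^+ 2)).
by apply: eq_bigr => k _; rewrite sub_mul.
Qed.

Lemma ncol_extv (T : {set 'I_d}) (y : 'cV[C]_#|T|) : ncol (extv y) = ncol y.
Proof.
rewrite /ncol !ncolE (bigID (mem T)) /= [X in _ + X]big1 ?addr0.
  rewrite (big_enum_val (fun j => `|extv y j 0| ^+ 2)).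
  apply: eq_bigr => k _; rewrite mxE (bigD1 k) //= big1 ?addr0 ?eqxx ?mul1r //.
  by move=> l /negbTE nl; rewrite (inj_eq enum_val_inj) nl mul0r.
move=> j jT; rewrite mxE big1 ?normr0 ?expr0n //= => l _.
case: eqP => [h|]; last by rewrite mul0r.
by move: (enum_valP l); rewrite h (negbTE jT).
Qed.

Lemma extv_restr (T : {set 'I_d}) (z : 'cV[C]_d) :
  (forall j, j \notin T -> z j 0 = 0) ->
  extv (\col_(k < #|T|) z (enum_val k) 0) = z.
Proof.
move=> hz; apply/matrixP => j i; rewrite ord1 {i} mxE.
have [jT|jT] := boolP (j \in T); last first.
  rewrite hz // big1 // => l _; rewrite mxE.
  case: eqP => [h|]; last by rewrite mul0r.
  by move: (enum_valP l); rewrite h (negbTE jT).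
rewrite (bigD1 (enum_rank_in jT j)) //= big1 ?addr0.
  by rewrite mxE enum_rankK_in // eqxx mul1r.
move=> l nl; rewrite mxE; case: (enum_val l =P j) => [h|_]; last by rewrite mul0r.
have := enum_valK_in jT l; rewrite h => E.
by rewrite E eqxx in nl.
Qed.

Lemma sum_setT (F : 'I_d -> C) : \sum_(i in [set: 'I_d]) F i = \sum_i F i.
Proof. by apply: eq_bigl => i; rewrite finset.in_setT. Qed.

Lemma sub_sum_le (F : 'I_d -> C) (S S' : {set 'I_d}) :
  (forall i, 0 <= F i) -> S \subset S' ->
  \sum_(i in S) F i <= \sum_(i in S') F i.
Proof.
move=> F0 /fintype.subsetP sS; rewrite (big_mkcond (mem S)) (big_mkcond (mem S')).
apply: ler_sum => i _; case: ifP => /= iS; first by rewrite (sS _ iS).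
by case: ifP.
Qed.

Lemma lam_le1 (S T : {set 'I_d}) : (0 < #|T|)%N -> lamM (submx_of U S T) <= 1.
Proof.
move=> hT; have [_ [y ynz att] _] := lamM_spec (submx_of U S T) hT.
have : ncol (submx_of U S T *m y) <= 1 * ncol y.
  rewrite mul1r ncol_sub -(ncol_extv y) -ncolU /ncol ncolE -sum_setT.
  by apply: sub_sum_le; [move=> i; rewrite exprn_ge0 | apply: finset.subsetT].
by rewrite att (ler_pM2r (ncol_gt0 ynz)) lecR.
Qed.

Lemma lam_mono (S S' T : {set 'I_d}) : S \subset S' -> (0 < #|T|)%N ->
  lamM (submx_of U S T) <= lamM (submx_of U S' T).
Proof.
move=> sS hT; have [_ [y ynz att] _] := lamM_spec (submx_of U S T) hT.
have [bnd _ _] := lamM_spec (submx_of U S' T) hT.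
have : ncol (submx_of U S T *m y) <= ncol (submx_of U S' T *m y).
  rewrite !ncol_sub; apply: sub_sum_le => // i; exact: exprn_ge0.
rewrite att => /le_trans /(_ (bnd y)).
by rewrite (ler_pM2r (ncol_gt0 ynz)) lecR.
Qed.

Lemma lam_ge1 (T : {set 'I_d}) : (0 < #|T|)%N -> 1 <= lamM (submx_of U (finset.setT : {set 'I_d}) T).
Proof.
move=> hT; have [bnd _ _] := lamM_spec (submx_of U (finset.setT : {set 'I_d}) T) hT.
pose y : 'cV[C]_#|T| := const_mx 1.
have ynz : y != 0.
  apply/negP => /eqP /matrixP /(_ (Ordinal hT) 0); rewrite !mxE.
  by move/eqP; rewrite oner_eq0.
have := bnd y; rewrite ncol_sub sum_setT.
have -> : \sum_i `|(U *m extv y) i 0| ^+ 2 = ncol y.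
  by rewrite -ncolE -/(ncol _) ncolU ncol_extv.
rewrite -{1}[ncol y]mul1r (ler_pM2r (ncol_gt0 ynz)).
by rewrite -[1]/(1%:C%C) lecR.
Qed.

Lemma lam_LP (S T : {set 'I_d}) (z : 'cV[C]_d) : (0 < #|T|)%N ->
  (forall j, j \notin T -> z j 0 = 0) ->
  \sum_(i in S) `|(U *m z) i 0| ^+ 2 <= (lamM (submx_of U S T))%:C%C * ncol z.
Proof.
move=> hT hz; have [bnd _ _] := lamM_spec (submx_of U S T) hT.
have := bnd (\col_(k < #|T|) z (enum_val k) 0).
by rewrite ncol_sub -ncol_extv extv_restr.
Qed.

End Sub.
End B.

Section D.
Variable R : realType.
Local Notation C := R[i].

Lemma ReD (x y : C) : complex.Re (x + y) = complex.Re x + complex.Re y.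
Proof. by case: x => a b; case: y. Qed.

Lemma Re_sum (I : finType) (P : pred I) (F : I -> C) :
  complex.Re (\sum_(i | P i) F i) = \sum_(i | P i) complex.Re (F i).
Proof. by apply: (big_morph _ ReD). Qed.

Lemma Re_le (x y : C) : x <= y -> complex.Re x <= complex.Re y.
Proof. by rewrite lecE => /andP[]. Qed.

Lemma adjmxD m n (X Y : 'M[C]_(m,n)) : adjmx (X + Y) = adjmx X + adjmx Y.
Proof. by apply/matrixP => i j; rewrite !mxE rmorphD. Qed.

Lemma adjmx00 (X : 'M[C]_1) : adjmx X 0 0 = (X 0 0)^*.
Proof. by rewrite adjmx_ij. Qed.

Lemma csC n (y z : 'cV[C]_n) : `|(adjmx y *m z) 0 0| ^+ 2 <= ncol y * ncol z.
Proof.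
have E1 : (adjmx y *m z) 0 0 = dotmx z^T y^T.
  rewrite dotmxE !mxE; apply: eq_bigr => k _.
  by rewrite -adjmxE !adjmx_ij !mxE; apply: mulrC.
have E2 : forall w : 'cV[C]_n, ncol w = dotmx w^T w^T.
  move=> w; rewrite /ncol dotmxE !mxE; apply: eq_bigr => k _.
  by rewrite -adjmxE !adjmx_ij !mxE; apply: mulrC.
by rewrite E1 !E2 mulrC; apply: (CauchySchwarz (@dotmx C n)).
Qed.

Lemma addmx00 (X Y : 'M[C]_1) : (X + Y) 0 0 = X 0 0 + Y 0 0.
Proof. by rewrite mxE. Qed.

Lemma ncolD n (x y : 'cV[C]_n) :
  ncol (x + y) = ncol x + ncol y + ((adjmx x *m y) 0 0 + ((adjmx x *m y) 0 0)^*).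
Proof.
rewrite /ncol adjmxD mulmxDl !mulmxDr !addmx00.
have -> : (adjmx y *m x) 0 0 = ((adjmx x *m y) 0 0)^*.
  by rewrite -adjmx00 adjmxM adjmxK.
set p := (adjmx x *m x) 0 0; set q := (adjmx y *m y) 0 0.
set r := (adjmx x *m y) 0 0.
clearbody p q r; ring.
Qed.

Lemma real_ofC (x : C) : 0 <= x -> x = (complex.Re x)%:C%C.
Proof. by move=> x0; rewrite RRe_real // ger0_real. Qed.

Lemma final_arith (a b gr gi l : R) : 0 <= a -> 0 <= b -> 0 <= l ->
  (a + b) ^+ 2 <= a + b + 2 * gr -> gr ^+ 2 + gi ^+ 2 <= a * (l * b) ->
  a + b <= 1 + Num.sqrt l.
Proof.
move=> a0 b0 l0 h1 h2.
set s := Num.sqrt l.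
have s0 : 0 <= s by apply: sqrtr_ge0.
have ls : l = s ^+ 2 by rewrite sqr_sqrtr.
rewrite ls in h2.
have st1 : gr <= s * (a + b) / 2.
  rewrite leNgt; apply/negP => hc.
  have hc0 : 0 <= s * (a + b) / 2 by rewrite divr_ge0 // mulr_ge0 // addr_ge0.
  have : (s * (a + b) / 2) ^+ 2 < gr ^+ 2.
    by rewrite ltr_pXn2r // ?nnegrE // (le_trans hc0) // ltW.
  have : s ^+ 2 * (a * b) <= (s * (a + b) / 2) ^+ 2.
    have H4 : 4 * (a * b) <= (a + b) ^+ 2.
      rewrite -subr_ge0; have -> : (a + b) ^+ 2 - 4 * (a * b) = (a - b) ^+ 2 by ring.
      exact: sqr_ge0.
    have e : (s * (a + b) / 2) ^+ 2 = s ^+ 2 * ((a + b) ^+ 2) / 4 by field.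
    rewrite e; have := ler_wpM2l (sqr_ge0 s) H4.
    lra.
  have : 0 <= gi ^+ 2 by apply: sqr_ge0.
  nra.
have st2 : (a + b) ^+ 2 <= (a + b) * (1 + s) by nra.
nra.
Qed.

Section LP.
Variables (d : nat) (A B : 'M[C]_d).
Hypotheses (hA : adjmx A *m A = 1%:M) (hB : adjmx B *m B = 1%:M).
Let U := adjmx A *m B.

Lemma hU : adjmx U *m U = 1%:M.
Proof.
rewrite /U adjmxM adjmxK !mulmxA -(mulmxA _ A) (mulmx1C hA) mulmx1.
exact: hB.
Qed.

Lemma mask_ncol (S : {set 'I_d}) (w : 'cV[C]_d) :
  ncol (\col_i (if i \in S then w i 0 else 0)) = \sum_(i in S) `|w i 0| ^+ 2.
Proof.
rewrite /ncol ncolE [RHS]big_mkcond; apply: eq_bigr => i _.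
rewrite mxE; case: ifP => h; first by [].
by rewrite normr0 expr0n.
Qed.

Lemma mask_dot (S : {set 'I_d}) (w : 'cV[C]_d) :
  (adjmx w *m \col_i (if i \in S then w i 0 else 0)) 0 0 = \sum_(i in S) `|w i 0| ^+ 2.
Proof.
rewrite mxE [RHS]big_mkcond; apply: eq_bigr => i _.
rewrite adjmx_ij mxE; case: ifP => _; last by rewrite mulr0.
by rewrite normCK mulrC.
Qed.

Lemma LP_pure (S T : {set 'I_d}) (psi : 'cV[C]_d) : (0 < #|T|)%N -> ncol psi = 1 ->
  \sum_(i in S) `|(adjmx A *m psi) i 0| ^+ 2 + \sum_(j in T) `|(adjmx B *m psi) j 0| ^+ 2
  <= 1 + (Num.sqrt (lamM (submx_of U S T)))%:C%C.
Proof.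
move=> hT hpsi.
set al := adjmx A *m psi; set be := adjmx B *m psi.
set alt := \col_i (if i \in S then al i 0 else 0).
set bet := \col_i (if i \in T then be i 0 else 0).
set a := \sum_(i in S) `|al i 0| ^+ 2.
set b := \sum_(j in T) `|be j 0| ^+ 2.
set u := A *m alt; set v := B *m bet.
have Hu : ncol u = a by rewrite /u (ncolU hA) mask_ncol.
have Hv : ncol v = b by rewrite /v (ncolU hB) mask_ncol.
have Hpu : (adjmx psi *m u) 0 0 = a.
  rewrite /u mulmxA -[adjmx psi *m A](adjmxK _) adjmxM adjmxK -/al.
  exact: mask_dot.
have Hpv : (adjmx psi *m v) 0 0 = b.
  rewrite /v mulmxA -[adjmx psi *m B](adjmxK _) adjmxM adjmxK -/be.
  exact: mask_dot.
set g := (adjmx u *m v) 0 0.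
set gam := \col_i (if i \in S then (U *m bet) i 0 else 0).
have Hg : g = (adjmx alt *m gam) 0 0.
  rewrite /g /u /v adjmxM -!mulmxA (mulmxA (adjmx A)) -/U.
  rewrite !mxE; apply: eq_bigr => i _; rewrite adjmx_ij !mxE.
  by case: ifP => _; rewrite ?rmorph0 ?mul0r.
have Hgam : ncol gam <= (lamM (submx_of U S T))%:C%C * b.
  rewrite mask_ncol (_ : b = ncol bet); last by rewrite mask_ncol.
  apply: (@lam_LP R d U S T bet hT) => j jT.
  by rewrite mxE (negbTE jT).
have a0 : 0 <= a by apply: sumr_ge0 => i _; apply: exprn_ge0.
have b0 : 0 <= b by apply: sumr_ge0 => i _; apply: exprn_ge0.
have [_ _ l0] := lamM_spec (submx_of U S T) hT.
set l := lamM (submx_of U S T) in Hgam l0 *.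
have CS1 : `|g| ^+ 2 <= a * (l%:C%C * b).
  rewrite Hg; apply: (le_trans (csC _ _)).
  have -> : ncol alt = a by rewrite mask_ncol.
  by apply: ler_wpM2l.
have CS2 : `|(adjmx psi *m (u + v)) 0 0| ^+ 2 <= ncol (u + v).
  by have := csC psi (u + v); rewrite hpsi mul1r.
have E1 : (adjmx psi *m (u + v)) 0 0 = a + b by rewrite mulmxDr addmx00 Hpu Hpv.
have E2 : ncol (u + v) = a + b + (g + g^*) by rewrite ncolD Hu Hv addrA.
rewrite E1 E2 in CS2.
have gg : g + g^* = 2 * (complex.Re g)%:C%C := addcJ g.
rewrite gg in CS2.
have ra := real_ofC a0; have rb := real_ofC b0.
set ar := complex.Re a in ra; set br := complex.Re b in rb.
set gr := complex.Re g in gg CS2.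
have ar0 : 0 <= ar by rewrite -lecR -ra.
have br0 : 0 <= br by rewrite -lecR -rb.
have C1 : gr ^+ 2 + complex.Im g ^+ 2 <= ar * (l * br).
  by rewrite -lecR add_Re2_Im2 !rmorphM /= -ra -rb.
have C2 : (ar + br) ^+ 2 <= ar + br + 2 * gr.
  rewrite -lecR rmorphXn !rmorphD rmorphM /= -ra -rb rmorph_nat.
  by move: CS2; rewrite ger0_norm ?addr_ge0.
have := final_arith ar0 br0 l0 C2 C1.
by rewrite -lecR rmorphD rmorphD /= rmorph1 -ra -rb.
Qed.

End LP.
End D.

Section E.
Variable R : realType.
Local Notation C := R[i].

Lemma herm_decomp n (X : 'M[C]_n) : adjmx X = X ->
  exists (P : 'M[C]_n) (D : 'rV[C]_n),
  [/\ P *m adjmx P = 1%:M, adjmx P *m P = 1%:M & X = adjmx P *m diag_mx D *m P].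
Proof.
move=> hX.
have Xh : X \is hermsymmx.
  by apply/is_hermitianmxP; rewrite expr0 scale1r -adjmxE hX.
pose P := spectralmx X; pose D := spectral_diag X.
have Pu : P \is unitarymx by apply: spectral_unitarymx.
have PP : P *m adjmx P = 1%:M by rewrite adjmxE; apply/unitarymxP.
exists P, D; split => //; first exact: mulmx1C.
rewrite adjmxE -invmx_unitary //.
exact/orthomx_spectralP/hermitian_normalmx.
Qed.

Lemma ncol_e n (k : 'I_n) : ((delta_mx 0 k : 'rV[C]_n) *m adjmx (delta_mx 0 k : 'rV[C]_n)) 0 0 = 1.
Proof.
rewrite nrowE (bigD1 k) //= big1 ?addr0.
  by rewrite mxE !eqxx /= normr1 expr1n.
by move=> j /negbTE nj; rewrite mxE eqxx nj /= normr0 expr0n.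
Qed.

Lemma state_diag d (rho : 'M[C]_d) : is_state rho ->
  exists (D : 'I_d -> C) (psi : 'I_d -> 'cV[C]_d),
  [/\ forall k, 0 <= D k, \sum_k D k = 1, forall k, ncol (psi k) = 1 &
      forall (A : 'M[C]_d) i,
        (adjmx A *m rho *m A) i i = \sum_k D k * `|(adjmx A *m psi k) i 0| ^+ 2].
Proof.
case=> hh hpsd htr.
have [P [D [PP P'P E]]] := herm_decomp hh.
pose psi k := adjmx ((delta_mx 0 k : 'rV[C]_d) *m P).
have eD : forall k : 'I_d, (delta_mx 0 k : 'rV[C]_d) *m diag_mx D = D 0 k *: (delta_mx 0 k : 'rV[C]_d).
  by move=> k; rewrite -rowE row_diag_mx.
exists (fun k => D 0 k), psi; split.
- move=> k; have := hpsd (psi k).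
  rewrite /psi /= (adjmxK ((delta_mx 0 k : 'rV[C]_d) *m P)) E adjmxM.
  set e := (delta_mx 0 k : 'rV[C]_d).
  have -> : e *m P *m (adjmx P *m diag_mx D *m P) *m (adjmx P *m adjmx e)
            = e *m diag_mx D *m adjmx e.
    by rewrite !mulmxA -(mulmxA e P (adjmx P)) PP mulmx1 -(mulmxA _ P (adjmx P)) PP mulmx1.
  by rewrite eD -scalemxAl mxE ncol_e mulr1.
- move: htr; rewrite E -mulmxA mxtrace_mulC -mulmxA PP mulmx1 mxtrace_diag.
  by [].
- move=> k; rewrite /ncol /psi /= adjmxK adjmxM -mulmxA (mulmxA P) PP mul1mx.
  exact: ncol_e.
- move=> A i; rewrite E.
  have -> : adjmx A *m (adjmx P *m diag_mx D *m P) *m A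
            = adjmx (P *m A) *m diag_mx D *m (P *m A).
    by rewrite adjmxM !mulmxA.
  rewrite mxE; apply: eq_bigr => k _.
  rewrite mul_mx_diag mxE adjmx_ij.
  have -> : (adjmx A *m psi k) i 0 = ((P *m A) k i)^*.
    rewrite /psi /= -adjmxM adjmx_ij -mulmxA -rowE mxE.
    by [].
  by rewrite normCK conjCK; ring.
Qed.

End E.

Section F.
Variable R : realType.
Local Notation C := R[i].

Variables (d : nat) (A B rho : 'M[C]_d).
Hypotheses (hA : adjmx A *m A = 1%:M) (hB : adjmx B *m B = 1%:M) (hr : is_state rho).
Let U := adjmx A *m B.
Let p := fun i : 'I_d => complex.Re ((adjmx A *m rho *m A) i i).
Let q := fun j : 'I_d => complex.Re ((adjmx B *m rho *m B) j j).

Lemma sing_maxE m n (M : 'M[C]_(m, n)) : sing_max M = Num.sqrt (lamM M).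
Proof. by []. Qed.

Lemma diag_ge0 (X : 'M[C]_d) i : 0 <= complex.Re ((adjmx X *m rho *m X) i i).
Proof.
have [D [psi [D0 _ _ Hx]]] := state_diag hr.
rewrite Hx; apply: (@Re_le _ 0); apply: sumr_ge0 => k _.
by apply: mulr_ge0 => //; apply: exprn_ge0.
Qed.

Lemma diag_sum (X : 'M[C]_d) : adjmx X *m X = 1%:M ->
  \sum_i complex.Re ((adjmx X *m rho *m X) i i) = 1.
Proof.
move=> hX; have [D [psi [D0 Ds psi1 Hx]]] := state_diag hr.
rewrite -Re_sum (eq_bigr _ (fun i _ => Hx X i)) exchange_big /=.
have hX' : adjmx (adjmx X) *m adjmx X = 1%:M by rewrite adjmxK; apply: mulmx1C.
rewrite (eq_bigr (fun k => D k)); first by rewrite Ds.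
move=> k _; rewrite -mulr_sumr -ncolE -/(ncol _) (ncolU hX') psi1 mulr1.
by [].
Qed.

Lemma LP_state (S T : {set 'I_d}) : (0 < #|T|)%N ->
  \sum_(i in S) p i + \sum_(j in T) q j <= 1 + sing_max (submx_of U S T).
Proof.
move=> hT; have [D [psi [D0 Ds psi1 Hx]]] := state_diag hr.
rewrite sing_maxE /p /q -!Re_sum -ReD.
have -> : 1 + Num.sqrt (lamM (submx_of U S T)) =
          complex.Re (1 + (Num.sqrt (lamM (submx_of U S T)))%:C%C) by [].
apply: Re_le.
rewrite (eq_bigr _ (fun i _ => Hx A i)) (eq_bigr _ (fun i _ => Hx B i)).
rewrite exchange_big [X in _ + X]exchange_big /= -big_split /=.
set Z := (1 + _)%R.
rewrite -[Z]mul1r -{1}Ds mulr_suml; apply: ler_sum => k _.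
rewrite -!mulr_sumr -mulrDr; apply: ler_wpM2l => //.
exact: (LP_pure hA hB S hT (psi1 k)).
Qed.

Definition Es (k : nat) := [set x : R | exists S T : {set 'I_d},
  [/\ (0 < #|S|)%N, (0 < #|T|)%N, (#|S| + #|T| = k.+1)%N &
      x = sing_max (submx_of U S T)]]%classic.

Lemma sE k : s_seq U k.+1 = sup (Es k.+1).
Proof. by []. Qed.

Lemma Es_ub k : ubound (Es k) 1.
Proof.
move=> x [S [T [_ hT _ ->]]]; rewrite sing_maxE -sqrtr1.
exact/ler_wsqrtr/(lam_le1 (hU hA hB)).
Qed.

Lemma Es_ge0 k x : Es k x -> 0 <= x.
Proof. by move=> [S [T [_ _ _ ->]]]; rewrite sing_maxE sqrtr_ge0. Qed.

Lemma s_ge0 k : 0 <= s_seq U k.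
Proof.
case: k => [|k]; first by [].
rewrite sE; have [[x Ex]|ne] := pselect (Es k.+1 !=set0)%classic.
  apply: (le_trans (Es_ge0 Ex)); apply: ub_le_sup => //.
  by exists 1; apply: Es_ub.
by rewrite sup_out // => -[].
Qed.

Lemma s_elem k (S T : {set 'I_d}) : (0 < #|S|)%N -> (0 < #|T|)%N ->
  (#|S| + #|T| = k.+2)%N -> sing_max (submx_of U S T) <= s_seq U k.+1.
Proof.
move=> hS hT hk; rewrite sE; apply: ub_le_sup; first by exists 1; apply: Es_ub.
by exists S, T.
Qed.

Lemma s_d : (0 < d)%N -> s_seq U d = 1.
Proof.
move=> hd; have := sE d.-1; rewrite prednK // => ->.
set T := [set (Ordinal hd)].
set S := (finset.setT : {set 'I_d}).
have hT : (0 < #|T|)%N by rewrite cards1.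
have e1 : sing_max (submx_of U S T) = 1.
  rewrite sing_maxE.
  have -> : lamM (submx_of U S T) = 1.
    apply/eqP; rewrite eq_le (lam_le1 (hU hA hB) S hT).
    exact: (lam_ge1 (hU hA hB) hT).
  exact: sqrtr1.
have E1 : Es d 1.
  exists S, T; split => //; first by rewrite cardsT card_ord.
  by rewrite cardsT card_ord cards1 addn1.
apply/eqP; rewrite eq_le; apply/andP; split.
  by apply: ge_sup; [exists 1 | apply: Es_ub].
by apply: ub_le_sup => //; exists 1; apply: Es_ub.
Qed.

Lemma s_mono k : (k < d)%N -> s_seq U k <= s_seq U k.+1.
Proof.
case: k => [|k] hk; first exact: s_ge0.
rewrite [s_seq U k.+1]sE.
have [ne|ne] := pselect (Es k.+1 !=set0)%classic; last first.
  by rewrite sup_out ?s_ge0 // => -[].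
apply: ge_sup => // x [S [T [hS hT hc ->]]].
have [i iS] : exists i, i \notin S.
  case: (pickP (fun i => i \notin S)) => [i iS|h]; first by exists i.
  have SE : S = finset.setT.
    by apply/setP => i; have := h i; rewrite finset.in_setT /= => /negbFE ->.
  move: hc; rewrite SE cardsT card_ord => hc; lia.
set S' := i |: S.
have hS' : #|S'| = #|S|.+1 by rewrite cardsU1 iS.
apply: (@le_trans _ _ (sing_max (submx_of U S' T))).
  rewrite !sing_maxE; apply: ler_wsqrtr; apply: lam_mono => //.
  exact: finset.subsetUr.
apply: s_elem => //; lia.
Qed.

End F.

Section Comb.
Variable R : realType.
Variables (d : nat) (p q : 'I_d -> R).

Definition valv (v : 'I_d + 'I_d) : R := match v with inl i => p i | inr j => q j end.

Lemma sum_take_split (t : seq ('I_d + 'I_d)) : uniq t ->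
  exists S T : {set 'I_d},
    \sum_(v <- t) valv v = \sum_(i in S) p i + \sum_(j in T) q j /\
    (#|S| + #|T| = size t)%N.
Proof.
move=> ut; exists [set i | inl i \in t], [set j | inr j \in t]; split.
  rewrite big_uniq // big_mkcond big_sumType /=.
  rewrite [\sum_(i in _) p i]big_mkcond [\sum_(j in _) q j]big_mkcond.
  by congr (_ + _); apply: eq_bigr => i _; rewrite inE.
rewrite -(card_uniqP ut) -!sum1_card.
rewrite [in RHS]big_mkcond big_sumType /= [X in (X + _)%N]big_mkcond.
rewrite [X in (_ + X)%N]big_mkcond /=.
by congr (_ + _)%N; apply: eq_bigr => i _; rewrite inE.
Qed.

End Comb.


Section Assemble.
Variable R : realType.
Variables (alpha : R) (a0 : 0 <= alpha).
Variables (d : nat) (hd : (0 < d)%N) (p q : 'I_d -> R) (s : nat -> R).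
Hypotheses (p0 : forall i, 0 <= p i) (q0 : forall j, 0 <= q j).
Hypotheses (p1 : \sum_i p i = 1) (q1 : \sum_j q j = 1).
Hypotheses (s0 : s 0%N = 0) (sd : s d = 1) (smono : forall k, (k < d)%N -> s k <= s k.+1).
Hypothesis (LP : forall S T : {set 'I_d}, (0 < #|S|)%N -> (0 < #|T|)%N ->
  (#|S| + #|T| <= d.+1)%N ->
  \sum_(i in S) p i + \sum_(j in T) q j <= 1 + s (#|S| + #|T|).-1).

Hypothesis (sge0 : forall k, 0 <= s k).

Let val := valv p q.
Local Notation ph := (phi R alpha).

Lemma sum_in_le (F : 'I_d -> R) (S : {set 'I_d}) : (forall i, 0 <= F i) ->
  \sum_(i in S) F i <= \sum_i F i.
Proof.
move=> F0; rewrite [X in _ <= X](bigID (mem S)) /= lerDl.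
by apply: sumr_ge0 => i _.
Qed.

Lemma assemble :
  \sum_(k < d) ph (s k.+1 - s k) <= \sum_i ph (p i) + \sum_j ph (q j).
Proof.
pose v0 : 'I_d + 'I_d := inl (Ordinal hd).
pose r := fun u v : 'I_d + 'I_d => val v <= val u.
pose e := sort r [seq v <- enum {: 'I_d + 'I_d} | 0 < val v].
pose n := size e.
pose x := fun i => val (nth v0 e i).
pose y := fun i : nat => if i is j.+1 then (if (j < d)%N then s j.+1 - s j else 0) else 1.
pose N := (d + d)%N.
have val0 : forall v, 0 <= val v by case.
have rtot : total r by move=> u v; rewrite /r le_total.
have rtr : transitive r by move=> b a c h1 h2; rewrite /r; exact: le_trans h2 h1.
have rrefl : reflexive r by move=> u; rewrite /r.
have esort : sorted r e := sort_sorted rtot _.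
have euniq : uniq e by rewrite sort_uniq filter_uniq // enum_uniq.
have eperm : perm_eq e [seq v <- enum {: 'I_d + 'I_d} | 0 < val v] by rewrite /e perm_sort.
have emem : forall v, v \in e -> 0 < val v.
  by move=> v; rewrite (perm_mem eperm) mem_filter => /andP[].
have sum_e : forall F : R -> R, F 0 = 0 ->
    \sum_(v <- e) F (val v) = \sum_i F (p i) + \sum_j F (q j).
  move=> F F0; rewrite (perm_big _ eperm) big_filter big_enum_cond /=.
  rewrite big_mkcond big_sumType /=; congr (_ + _); apply: eq_bigr => i _;
    case: ifP => // h.
    by have -> : p i = 0 by apply/eqP; rewrite eq_le p0 andbT leNgt h.
  by have -> : q i = 0 by apply/eqP; rewrite eq_le q0 andbT leNgt h.
have sum_x : forall F : R -> R, \sum_(i < n) F (x i) = \sum_(v <- e) F (val v).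
  by move=> F; rewrite (big_nth v0) big_mkord.
have n_le : (n <= N)%N.
  rewrite /n /e size_sort size_filter (leq_trans (count_size _ _)) //.
  by rewrite -cardE card_sum !card_ord.
have xpos : forall i, (i < n)%N -> 0 < x i.
  by move=> i hi; apply: emem; apply: mem_nth.
have xdec : forall i j, (i <= j)%N -> (j < n)%N -> x j <= x i.
  move=> i j hij hj; have := sorted_leq_nth rtr rrefl v0 esort.
  move=> /(_ i j); rewrite !inE => H.
  exact: (H (leq_ltn_trans hij hj) hj hij).
have ypos : forall i, 0 <= y i.
  case=> [|j] /=; first exact: ler01.
  by case: ifP => // hj; rewrite subr_ge0 smono.
have Ysum : forall m, (0 < m)%N -> \sum_(i < m) y i = 1 + s (minn m.-1 d).
  elim => [//|m IH] _; case: m IH => [|m] IH.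
    by rewrite big_ord1 /= min0n s0 addr0.
  rewrite big_ord_recr IH //=.
  case: (ltnP m d) => hm.
    have -> : minn m.+1 d = m.+1 by apply/minn_idPl.
    lra.
  have -> : minn m.+1 d = d by apply/minn_idPr; exact: leqW.
  lra.
have XN : \sum_(i < n) x i = 2.
  by rewrite (sum_x (fun t => t)) (sum_e (fun t => t)) // p1 q1.
have YN : \sum_(i < N) y i = 2.
  rewrite Ysum; last by rewrite /N; lia.
  have -> : minn N.-1 d = d by apply/minn_idPr; rewrite /N; lia.
  by rewrite sd.
have pS : forall S : {set 'I_d}, \sum_(i in S) p i <= 1.
  by move=> S; rewrite -p1; apply: sum_in_le.
have qS : forall S : {set 'I_d}, \sum_(i in S) q i <= 1.
  by move=> S; rewrite -q1; apply: sum_in_le.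
have Xk : forall k, (k <= n)%N -> \sum_(i < k) x i <= \sum_(i < k) y i.
  case=> [|k] kn; first by rewrite !big_ord0.
  have -> : \sum_(i < k.+1) x i = \sum_(v <- take k.+1 e) val v.
    rewrite (big_nth v0) size_takel // big_mkord; apply: eq_bigr => i _.
    by rewrite /x nth_take.
  have ut : uniq (take k.+1 e) by rewrite take_uniq.
  have [S [T [-> Hc]]] := sum_take_split p q ut.
  rewrite size_takel // in Hc.
  rewrite Ysum //=.
  have sk := sge0 (minn k d).
  case: (posnP #|S|) => [S0|Spos].
    rewrite (_ : S = finset.set0); last by apply/eqP; rewrite -cards_eq0 S0.
    rewrite big_set0 add0r; have := qS T; lra.
  case: (posnP #|T|) => [T0|Tpos].
    rewrite (_ : T = finset.set0); last by apply/eqP; rewrite -cards_eq0 T0.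
    rewrite big_set0 addr0; have := pS S; lra.
  case: (leqP k.+1 d.+1) => hk.
    have hk' : (#|S| + #|T| <= d.+1)%N by rewrite Hc.
    have := LP Spos Tpos hk'; rewrite Hc /=.
    by have -> : minn k d = k by apply/minn_idPl.
  have -> : minn k d = d by apply/minn_idPr; lia.
  rewrite sd; have := pS S; have := qS T; lra.
have XY : \sum_(i < n) x i = \sum_(i < N) y i by rewrite XN YN.
have kar := @karamata R alpha a0 x y n N n_le xpos xdec ypos Xk XY.
have RHS : \sum_(i < n) ph (x i) = \sum_i ph (p i) + \sum_j ph (q j).
  by rewrite (sum_x ph) (sum_e ph) // phi0.
have LHS : \sum_(i < N) ph (y i) = \sum_(k < d) ph (s k.+1 - s k).
  rewrite -(big_mkord xpredT (fun i => ph (y i))).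
  rewrite big_ltn; last by rewrite /N; lia.
  rewrite /= phi1 add0r big_add1 /=.
  set G := fun i : nat => ph (if (i < d)%N then s i.+1 - s i else 0).
  have spl : \sum_(0 <= i < N.-1) G i = \sum_(0 <= i < d) G i + \sum_(d <= i < N.-1) G i.
    by rewrite (big_cat_nat (leq0n d)) //; rewrite /N; lia.
  rewrite spl.
  have -> : \sum_(d <= i < N.-1) G i = 0.
    rewrite big_nat big1 // => i /andP[hi _].
    by rewrite /G ltnNge hi /= phi0.
  rewrite addr0 big_mkord; apply: eq_bigr => i _.
  by rewrite /G ltn_ord.
by rewrite -LHS -RHS.
Qed.
End Assemble.

Unset Implicit Arguments. Set Strict Implicit.

Theorem theorem3 (R : realType) (d : nat) (Aa Bb rho : 'M[R[i]]_d) (alpha : R) :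
  onb Aa -> onb Bb -> is_state rho -> 0 <= alpha ->
  let U := adjmx Aa *m Bb in
  let p := fun i : 'I_d => complex.Re ((adjmx Aa *m rho *m Aa) i i) in
  let q := fun j : 'I_d => complex.Re ((adjmx Bb *m rho *m Bb) j j) in
  tsallis alpha p + tsallis alpha q >= tsallis alpha (Wvec U).
Proof.
move=> hA hB hr a0 /=.
have hd : (0 < d)%N.
  case: d Aa Bb rho hA hB hr => [|d'] // Aa' Bb' rho' _ _ [_ _ htr].
  move: htr; rewrite /mxtrace big_ord0 => /eqP; rewrite eq_sym oner_eq0.
  by [].
set U := adjmx Aa *m Bb.
set p := (fun i : 'I_d => complex.Re ((adjmx Aa *m rho *m Aa) i i)).
set q := (fun i : 'I_d => complex.Re ((adjmx Bb *m rho *m Bb) i i)).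
have p1 : \sum_i p i = 1 by apply: diag_sum.
have q1 : \sum_j q j = 1 by apply: diag_sum.
have W1 : \sum_k Wvec U k = 1.
  rewrite /Wvec -(big_mkord xpredT (fun k => s_seq U k.+1 - s_seq U k)).
  by rewrite telescope_sumr // (s_d hA hB hd) subr0.
rewrite (tsallis_phi R alpha _ _ p1) (tsallis_phi R alpha _ _ q1) (tsallis_phi R alpha _ _ W1).
apply: (@assemble R alpha a0 d hd p q (s_seq U)).
- by move=> i; apply: diag_ge0.
- by move=> j; apply: diag_ge0.
- exact: p1.
- exact: q1.
- by [].
- exact: s_d.
- by move=> k hk; apply: s_mono.
- move=> S T hS hT hc.
  apply: (le_trans (LP_state hA hB hr S hT)); rewrite lerD2l.
  have e : (#|S| + #|T| = ((#|S| + #|T|).-2).+2)%N by lia.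
  rewrite e /=; apply: s_elem => //.
- by move=> k; apply: s_ge0.
Qed.
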